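(* In the setting described in the context, assume $c>4.1\cdot 10^{-5}a_2b^3$ and $b>10^5$. If $z=w_n$ with $n\geq 4$, then $\log z>\frac{n}{2}\log(bc)$.
   Context: A $D(4)$-quadruple is a set of four distinct positive integers such that the product of any two distinct elements increased by $4$ is a perfect square. Setting: $a_1<a_2<b<c<d$ are positive integers such that $\{a_1,b,c,d\}$ and $\{a_2,b,c,d\}$ are $D(4)$-quadruples. Let $r_2,s_2,t,z$ be the positive integers with $a_2b+4=r_2^2$, $a_2c+4=s_2^2$, $bc+4=t^2$, $cd+4=z^2$. For integers $z_{(0)},x_{(0)},z_{(1)},y_{(1)}$ define the sequences $v_0=z_{(0)}$, $v_1=\frac12(s_2z_{(0)}+cx_{(0)})$, $v_{m+2}=s_2v_{m+1}-v_m$, and $w_0=z_{(1)}$, $w_1=\frac12(tz_{(1)}+cy_{(1)})$, $w_{n+2}=tw_{n+1}-w_n$. The value $z$ admits a representation $z=v_m=w_n$ with nonnegative integers $m,n$ where either (i) $m\equiv n\equiv 0\pmod 2$, $x_{(0)}=y_{(1)}=2$, $|z_{(0)}|=|z_{(1)}|=2$, $z_{(0)}z_{(1)}>0$; or (ii) $m\equiv n\equiv 1\pmod 2$, $x_{(0)}=y_{(1)}=r_2$, $|z_{(0)}|=t$, $|z_{(1)}|=s_2$, $z_{(0)}z_{(1)}>0$. Statements ''$z=w_n$'' or ''$z=v_m=w_n$'' refer to such a representation. *)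

(* Defs.v *)
From Stdlib Require Import Reals ZArith.
Open Scope R_scope.

Definition is_square (x : Z) : Prop := exists k : Z, x = (k * k)%Z.

Definition D4_quadruple (a b c d : Z) : Prop :=
  (0 < a)%Z /\ (0 < b)%Z /\ (0 < c)%Z /\ (0 < d)%Z /\
  a <> b /\ a <> c /\ a <> d /\ b <> c /\ b <> d /\ c <> d /\
  is_square (a * b + 4) /\ is_square (a * c + 4) /\ is_square (a * d + 4) /\
  is_square (b * c + 4) /\ is_square (b * d + 4) /\ is_square (c * d + 4).

(* Binary recurrence u_0 = p0, u_1 = p1, u_{k+2} = q u_{k+1} - u_k (over R,
   so the halving in the initial value v_1 needs no integrality convention). *)
Fixpoint lin_rec_aux (q p0 p1 : R) (k : nat) : R * R :=
  match k with
  | O => (p0, p1)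
  | S k' => let (x, y) := lin_rec_aux q p0 p1 k' in (y, q * y - x)
  end.

Definition lin_rec (q p0 p1 : R) (k : nat) : R := fst (lin_rec_aux q p0 p1 k).

Definition vseq (s2 c z0 x0 : Z) (m : nat) : R :=
  lin_rec (IZR s2) (IZR z0) ((IZR s2 * IZR z0 + IZR c * IZR x0) / 2) m.

Definition wseq (t c z1 y1 : Z) (n : nat) : R :=
  lin_rec (IZR t) (IZR z1) ((IZR t * IZR z1 + IZR c * IZR y1) / 2) n.

(* Main.v *)
Require Import Defs.
From Stdlib Require Import Reals ZArith Lra Lia Psatz.
Open Scope R_scope.

Lemma lin_rec_0 q p0 p1 : lin_rec q p0 p1 0 = p0.
Proof. reflexivity. Qed.
Lemma lin_rec_1 q p0 p1 : lin_rec q p0 p1 1 = p1.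
Proof. reflexivity. Qed.
Lemma aux_S q p0 p1 k : lin_rec_aux q p0 p1 (S k) =
  (snd (lin_rec_aux q p0 p1 k), q * snd (lin_rec_aux q p0 p1 k) - fst (lin_rec_aux q p0 p1 k)).
Proof. simpl. destruct (lin_rec_aux q p0 p1 k); reflexivity. Qed.
Lemma lin_rec_SS q p0 p1 k :
  lin_rec q p0 p1 (S (S k)) = q * lin_rec q p0 p1 (S k) - lin_rec q p0 p1 k.
Proof. unfold lin_rec. rewrite !aux_S. reflexivity. Qed.

Lemma growth q p0 p1 be :
  be > 0 -> q * be >= be * be + 1 -> p1 >= be * p0 -> p1 > 0 ->
  forall k, lin_rec q p0 p1 (S k) >= be * lin_rec q p0 p1 k /\
            lin_rec q p0 p1 (S k) >= be ^ k * p1.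
Proof.
  intros Hb Hq H1 H2 k. induction k as [|k [IH1 IH2]].
  - rewrite lin_rec_1, lin_rec_0. simpl. lra.
  - rewrite lin_rec_SS.
    assert (Hp : be ^ k > 0) by (apply pow_lt; lra).
    assert (Hu : lin_rec q p0 p1 (S k) >= 0) by nra.
    split.
    + assert (be * (q * lin_rec q p0 p1 (S k) - lin_rec q p0 p1 k)
              >= be * (be * lin_rec q p0 p1 (S k))) by nra.
      nra.
    + simpl. 
      assert (be * (q * lin_rec q p0 p1 (S k) - lin_rec q p0 p1 k)
              >= be * (be * lin_rec q p0 p1 (S k))) by nra.
      assert (q * lin_rec q p0 p1 (S k) - lin_rec q p0 p1 k >= be * lin_rec q p0 p1 (S k)) by nra.
      nra.
Qed.

Lemma sq_ge x y : x >= 0 -> y >= 0 -> x * x >= y * y -> x >= y.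
Proof. intros. destruct (Rge_or_gt x y); auto. nra. Qed.
Lemma sq_gt x y : x >= 0 -> y >= 0 -> x * x > y * y -> x > y.
Proof. intros. destruct (Rgt_or_ge x y); auto. nra. Qed.

Theorem mainTheorem8 :
  forall (a1 a2 b c d r2 s2 t z : Z),
    (0 < a1)%Z -> (a1 < a2)%Z -> (a2 < b)%Z -> (b < c)%Z -> (c < d)%Z ->
    D4_quadruple a1 b c d -> D4_quadruple a2 b c d ->
    (0 < r2)%Z -> (0 < s2)%Z -> (0 < t)%Z -> (0 < z)%Z ->
    (a2 * b + 4 = r2 * r2)%Z -> (a2 * c + 4 = s2 * s2)%Z ->
    (b * c + 4 = t * t)%Z -> (c * d + 4 = z * z)%Z ->
    forall (z0 x0 z1 y1 : Z) (m n : nat),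
      ((Nat.even m = true /\ Nat.even n = true /\
        x0 = 2%Z /\ y1 = 2%Z /\ Z.abs z0 = 2%Z /\ Z.abs z1 = 2%Z /\
        (z0 * z1 > 0)%Z)
       \/
       (Nat.odd m = true /\ Nat.odd n = true /\
        x0 = r2 /\ y1 = r2 /\ Z.abs z0 = t /\ Z.abs z1 = s2 /\
        (z0 * z1 > 0)%Z)) ->
      IZR z = vseq s2 c z0 x0 m ->
      IZR z = wseq t c z1 y1 n ->
      IZR c > (41 / 1000000) * IZR a2 * IZR b ^ 3 ->
      IZR b > 10 ^ 5 ->
      (4 <= n)%nat ->
      ln (IZR z) > INR n / 2 * ln (IZR b * IZR c).
Proof.
  intros a1 a2 b c d r2 s2 t z Ha1 H12 H2b Hbc Hcd _ _ Hr2 Hs2 Ht Hz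
    Er Es Et Ez z0 x0 z1 y1 m n Hcase _ Hw Hc Hb Hn.
  assert (HA : 1 <= IZR a2) by (apply IZR_le; lia).
  assert (HBC : IZR b <= IZR c) by (apply IZR_le; lia).
  apply (f_equal IZR) in Er, Es, Et.
  rewrite plus_IZR, !mult_IZR in Er, Es, Et.
  apply IZR_lt in Hr2, Hs2, Ht.
  set (A := IZR a2) in *. set (B := IZR b) in *. set (C := IZR c) in *.
  set (R2 := IZR r2) in *. set (S2 := IZR s2) in *. set (T := IZR t) in *.
  simpl in Hc, Hb.
  assert (HB : B > 100000) by lra.
  assert (h1 : C > 4 * A * B * B).
  { assert (41/1000000 * B > 4) by lra.
    assert (A * B * B > 0) by nra. nra. }
  assert (hAB : A * B >= B) by nra.
  assert (hABB : A * B * B >= B * B) by nra.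
  assert (hBB : B * B >= 100000 * B) by nra.
  assert (h2 : C >= 400000 * B) by nra.
  assert (hBB2 : B * B >= 100000 * 100000) by nra.
  assert (hABB2 : A * B * B >= 100000 * 100000 * A).
  { replace (A * B * B) with (A * (B * B)) by ring. nra. }
  assert (h3 : C >= 40000000000 * A) by nra.
  set (be := sqrt (B * C)).
  assert (Hbe2 : be * be = B * C) by (apply sqrt_sqrt; nra).
  assert (Hbe : be > 0) by (apply sqrt_lt_R0; nra).
  assert (HTbe : T >= be) by nra.
  assert (HCbe : C >= be) by nra.
  assert (Hq : T * be >= be * be + 1).
  { assert ((T*be)*(T*be) >= (be*be+1)*(be*be+1)).
    { replace ((T*be)*(T*be)) with ((T*T)*(be*be)) by ring.
      rewrite <- Et, Hbe2. nra. }
    apply sq_ge; nra. }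
  set (w0 := IZR z1). set (Y := IZR y1).
  assert (Hinit : (T * w0 + C * Y) / 2 >= be * w0 /\ (T * w0 + C * Y) / 2 > be).
  { destruct Hcase as [[_ [_ [_ [Hy [_ [Hz1 _]]]]]] | [_ [_ [_ [Hy [_ [Hz1 _]]]]]]].
    - unfold Y; rewrite Hy.
      assert (z1 = 2%Z \/ z1 = (-2)%Z) as [-> | ->] by lia; unfold w0.
      + split; lra.
      + assert (C > 3 * be) by nra.
        assert (T <= 2 * be) by nra.
        split; lra.
    - unfold Y; rewrite Hy.
      assert (z1 = s2 \/ z1 = (- s2)%Z) as [-> | ->] by lia; unfold w0.
      + fold S2. fold R2.
        assert (HR : C * R2 >= be * S2).
        { apply sq_ge; [nra|nra|].
          replace ((C*R2)*(C*R2)) with (C*C*(R2*R2)) by ring.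
          replace ((be*S2)*(be*S2)) with ((be*be)*(S2*S2)) by ring.
          rewrite <- Er, <- Es, Hbe2. nra. }
        assert (S2 > 1) by nra.
        assert (be * S2 > be) by nra.
        assert (T * S2 >= be * S2) by nra.
        split; lra.
      + rewrite opp_IZR. fold S2. fold R2.
        set (X := C * R2). set (Z := T * S2).
        assert (HD : X * X - Z * Z = 4*C*C - 4*B*C - 4*A*C - 16).
        { unfold X, Z.
          replace ((C*R2)*(C*R2)) with (C*C*(R2*R2)) by ring.
          replace ((T*S2)*(T*S2)) with ((T*T)*(S2*S2)) by ring.
          rewrite <- Er, <- Es, <- Et. ring. }
        set (L := C*C - 2*B*C - A*C - 4).
        set (P := be * Z).
        assert (HC0 : C >= 40000000000) by lra.
        assert (HBCp : B*C > 0) by (apply Rmult_lt_0_compat; lra).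
        assert (HACp : A*C > 0) by (apply Rmult_lt_0_compat; lra).
        assert (HCC1 : C * C >= 400000 * B * C).
        { replace (400000 * B * C) with ((400000 * B) * C) by ring.
          apply Rmult_ge_compat_r; lra. }
        assert (HCC2 : C * C >= 40000000000 * A * C).
        { replace (40000000000 * A * C) with ((40000000000 * A) * C) by ring.
          apply Rmult_ge_compat_r; lra. }
        assert (HCC3 : C * C >= 40000000000 * C) by (apply Rmult_ge_compat_r; lra).
        assert (HBC1 : B * C >= 100000 * C).
        { apply Rmult_ge_compat_r; lra. }
        assert (HL : L >= 99/100 * (C*C)).
        { unfold L. lra. }
        assert (HP2 : P * P = B*C*(B*C+4)*(A*C+4)).
        { unfold P, Z.
          replace ((be*(T*S2))*(be*(T*S2))) with ((be*be)*(T*T)*(S2*S2)) by ring.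
          rewrite <- Es, <- Et, Hbe2. ring. }
        assert (HAC1 : A * C >= C) by (rewrite <- (Rmult_1_l C) at 2; apply Rmult_ge_compat_r; lra).
        assert (HBC4 : B*C+4 <= 10001/10000 * (B*C)) by lra.
        assert (HAC4 : A*C+4 <= 10001/10000 * (A*C)) by lra.
        assert (HAB : A * B * B * C <= C * C / 4).
        { assert (4*A*B*B*C <= C * C).
          { replace (4*A*B*B*C) with ((4*A*B*B)*C) by ring. apply Rmult_le_compat_r; lra. }
          lra. }
        assert (HP2' : P * P <= 3/10 * (C*C*(C*C))).
        { rewrite HP2.
          assert (B*C*(B*C+4) <= B*C*(10001/10000 * (B*C))) by (apply Rmult_le_compat_l; lra).
          assert (Hx : B*C*(B*C+4)*(A*C+4) <= B*C*(10001/10000 * (B*C))*(10001/10000 * (A*C))).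
          { apply Rmult_le_compat; try lra; apply Rmult_le_pos; lra. }
          assert (Hyy : B*C*(10001/10000 * (B*C))*(10001/10000 * (A*C))
                  = (10001/10000)*(10001/10000) * ((A*B*B*C) * (C*C))) by ring.
          assert (Hzz : (A*B*B*C) * (C*C) <= C*C/4 * (C*C)).
          { apply Rmult_le_compat_r; lra. }
          assert (Hw0 : C*C/4*(C*C) = /4 * (C*C*(C*C))) by field.
          rewrite Hw0 in Hzz. clear Hw0.
          assert (Hpos : C*C*(C*C) >= 0) by (apply Rle_ge, Rmult_le_pos; nra).
          set (Q := (A*B*B*C) * (C*C)) in *. set (K := C*C*(C*C)) in *.
          rewrite Hyy in Hx. lra. }
        assert (HP0 : P >= 0) by (unfold P, Z; apply Rle_ge, Rmult_le_pos; [lra|apply Rmult_le_pos; lra]).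
        assert (HL0 : L >= 0) by lra.
        assert (HLL : L * L >= (99/100*(C*C))*(99/100*(C*C))) by (apply Rmult_ge_compat; lra).
        assert (HPL : L > P).
        { apply sq_gt; try lra.
          assert (HK : C*C*(C*C) > 0) by (apply Rmult_lt_0_compat; nra).
          assert (HE : (99/100*(C*C))*(99/100*(C*C)) = 9801/10000 * (C*C*(C*C))) by field.
          rewrite HE in HLL.
          set (K := C*C*(C*C)) in *. lra. }
        assert (HX0 : X > 0) by (unfold X; apply Rmult_lt_0_compat; lra).
        assert (HZ0 : Z > 0) by (unfold Z; apply Rmult_lt_0_compat; lra).
        assert (HXZ : X * X > (Z + 2*be)*(Z + 2*be)).
        { assert ((Z + 2*be)*(Z + 2*be) = Z*Z + 4*P + 4*(be*be)) by (unfold P; ring).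
          rewrite Hbe2 in H. unfold L in HPL. lra. }
        assert (X > Z + 2 * be) by (apply sq_gt; lra).
        assert (E1 : T * - S2 = - Z) by (unfold Z; ring).
        assert (E2 : be * - S2 = - (be * S2)) by ring.
        assert (E3 : be * S2 >= 0) by (apply Rle_ge, Rmult_le_pos; lra).
        rewrite E1, E2. fold X. split; lra. }
  destruct Hinit as [Hi1 Hi2].
  assert (Hw1pos : (T * w0 + C * Y) / 2 > 0) by lra.
  pose proof (growth T w0 ((T * w0 + C * Y) / 2) be Hbe Hq Hi1 Hw1pos (pred n)) as [_ G].
  unfold wseq in Hw. fold T C w0 Y in Hw.
  replace (S (pred n)) with n in G by lia.
  rewrite <- Hw in G.
  assert (Hpow : IZR z > be ^ n).
  {
    assert (be ^ pred n > 0) by (apply pow_lt; lra).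
    apply Rge_gt_trans with (be ^ pred n * ((T * w0 + C * Y) / 2)); [exact G|].
    assert (Ep : be ^ n = be ^ pred n * be).
    { clear -Hn. destruct n as [|k]; [lia|]. simpl. ring. }
    rewrite Ep. apply Rmult_lt_compat_l; lra. }
  assert (Hln : ln (B * C) = 2 * ln be).
  { rewrite <- Hbe2. rewrite ln_mult by lra. ring. }
  rewrite Hln.
  replace (INR n / 2 * (2 * ln be)) with (ln (be ^ n)) by (rewrite ln_pow by lra; field).
  apply Rlt_gt. apply ln_increasing; [apply pow_lt; lra | lra].
Qed.
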